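(* Let $m>n>0$ be integers, and let $a,b,x$ be real numbers with $|x|<m^m/(n^n(m-n)^{m-n})$. Set $$S_{m,n}(a,b,x)=\sum_{k=1}^\infty(ak+b)\frac{x^k}{\binom{mk}{nk}}.$$ Then $$S_{m,n}(a,b,x)=n\int_0^1T_{m,n}(a,b,x;t)\,dt,$$ where $$T_{m,n}(a,b,x;t)=t^{n-1}(1-t)^{m-n}x\,\frac{(a-b)t^n(1-t)^{m-n}x+a+b}{(1-t^n(1-t)^{m-n}x)^3}.$$ *)

(* Defs.v *)
From Stdlib Require Import Reals.
From Coquelicot Require Import Coquelicot.
Open Scope R_scope.

Definition S_term (m n : nat) (a b x : R) (k : nat) : R :=
  (a * INR k + b) * x ^ k / Binomial.C (m * k)%nat (n * k)%nat.

Definition T_fun (m n : nat) (a b x t : R) : R :=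
  t ^ (n - 1)%nat * (1 - t) ^ (m - n)%nat * x *
  (((a - b) * t ^ n * (1 - t) ^ (m - n)%nat * x + a + b) /
   (1 - t ^ n * (1 - t) ^ (m - n)%nat * x) ^ 3).

(* Main.v *)
Require Import Defs.
From Stdlib Require Import Reals Lra Lia Arith Factorial.
From Coquelicot Require Import Coquelicot.
Open Scope R_scope.
Ltac fold_INR := repeat match goal with |- context [match ?p with 0%nat => 1 | S _ => INR ?p + 1 end] => change (match p with 0%nat => 1 | S _ => INR p + 1 end) with (INR (S p)) end.
Ltac toR := cbv beta; match goal with |- ?a = ?b => change (@eq R a b) end.

Lemma beta_nat (q p : nat) :
  is_RInt (fun t => t ^ p * (1 - t) ^ q) 0 1
    (INR (fact p) * INR (fact q) / INR (fact (p + q + 1))).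
Proof.
revert p; induction q as [|q IH]; intro p.
- assert (H : is_RInt (fun t => INR (S p) * t ^ p / INR (S p)) 0 1 (1 ^ S p / INR (S p) - 0 ^ S p / INR (S p))) .
  { apply (is_RInt_derive (fun t => t ^ S p / INR (S p))).
    - intros t _. auto_derive; [easy|]. field. split; [apply not_0_INR; lia| change (INR (S p) <> 0); apply not_0_INR; lia].
    - intros z _. apply (ex_derive_continuous (K:=R_AbsRing) (V:=R_NormedModule)). auto_derive. auto. }
  replace (INR (fact p) * INR (fact 0) / INR (fact (p + 0 + 1)))
    with (1 ^ S p / INR (S p) - 0 ^ S p / INR (S p)).
  + eapply is_RInt_ext. 2: exact H. intros t _. toR. rewrite pow_O. field. apply not_0_INR; lia.
  + rewrite pow1, pow_ne_zero by lia. rewrite Nat.add_0_r, Nat.add_1_r, fact_simpl, mult_INR. simpl (INR (fact 0)). field. split; apply not_0_INR; try lia.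
    apply fact_neq_0.
- assert (H : is_RInt (fun t => INR (S p) * t ^ p * (1 - t) ^ S q - INR (S q) * t ^ S p * (1 - t) ^ q) 0 1
     (1 ^ S p * (1 - 1) ^ S q - 0 ^ S p * (1 - 0) ^ S q)).
  { apply (is_RInt_derive (fun t => t ^ S p * (1 - t) ^ S q)).
    - intros t _. auto_derive; [easy|]. toR. fold_INR. simpl pow. unfold Rminus. ring.
    - intros z _. apply (ex_derive_continuous (K:=R_AbsRing) (V:=R_NormedModule)). auto_derive. auto. }
  rewrite Rminus_diag, !pow_ne_zero, !Rmult_0_l, !Rmult_0_r, Rminus_0_r in H by lia.
  specialize (IH (S p)).
  pose proof (is_RInt_plus _ _ _ _ _ _ H (is_RInt_scal _ _ _ (INR (S q)) _ IH)) as H2.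
  pose proof (is_RInt_scal _ _ _ (/ INR (S p)) _ H2) as H3.
  replace (INR (fact p) * INR (fact (S q)) / INR (fact (p + S q + 1)))
    with (scal (/ INR (S p)) (plus 0 (scal (INR (S q)) (INR (fact (S p)) * INR (fact q) / INR (fact (S p + q + 1)))))).
  + eapply is_RInt_ext. 2: exact H3. intros t _. unfold scal, plus; simpl. unfold mult; simpl. toR. fold_INR.
    field. apply not_0_INR; lia.
  + unfold scal, plus; simpl. unfold mult; simpl. fold_INR.
    try replace (S p + q + 1)%nat with (S (p + q + 1)) by lia.
    try replace (p + S q + 1)%nat with (S (p + q + 1)) by lia.
    rewrite ?fact_simpl. repeat rewrite ?mult_INR, ?plus_INR, ?S_INR. simpl (INR 1).
    assert (INR (fact p) <> 0) by (apply not_0_INR, fact_neq_0).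
    assert (INR (fact (p+q+1)) <> 0) by (apply not_0_INR, fact_neq_0).
    assert (0 <= INR p) by apply pos_INR. assert (0 <= INR q) by apply pos_INR.
    pose proof (INR_fact_lt_0 (p+q+1)). pose proof (INR_fact_lt_0 p). simpl (INR 0) in *. field. repeat split; nra.
Qed.

Definition cc (a b : R) (k : nat) := (INR k + 1) * (a * (INR k + 1) + b).

Lemma term_int m n a b x k : (0<n)%nat -> (n<m)%nat ->
 is_RInt (fun t => t^(n-1) * (1-t)^(m-n) * x * (cc a b k * (t^n*(1-t)^(m-n)*x)^k)) 0 1
   (S_term m n a b x (S k) / INR n).
Proof.
intros Hn Hm.
set (p := (n - 1 + n * k)%nat). set (q := (m - n)%nat). set (q' := (q * S k)%nat).
pose proof (is_RInt_scal _ _ _ (cc a b k * x ^ S k) _ (beta_nat q' p)) as H.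
replace (S_term m n a b x (S k) / INR n) with
  (scal (cc a b k * x ^ S k) (INR (fact p) * INR (fact q') / INR (fact (p + q' + 1)))).
- eapply is_RInt_ext. 2: exact H. intros t _. unfold scal; simpl; unfold mult; simpl. toR.
  unfold p, q'. rewrite !pow_add, !pow_mult, !Rpow_mult_distr. simpl pow. ring.
- unfold scal; simpl; unfold mult; simpl.
  unfold S_term, Binomial.C.
  replace (m * S k - n * S k)%nat with q' by (unfold q', q; rewrite Nat.mul_sub_distr_r; reflexivity).
  replace (p + q' + 1)%nat with (m * S k)%nat by (unfold p, q', q; nia).
  replace (n * S k)%nat with (S p) by (unfold p; nia).
  rewrite fact_simpl, mult_INR.
  replace (INR (S p)) with (INR n * (INR k + 1)) by (rewrite <- S_INR, <- mult_INR; f_equal; unfold p; nia).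
  unfold cc. rewrite S_INR.
  assert (INR (fact p) <> 0) by (apply not_0_INR, fact_neq_0).
  assert (INR (fact q') <> 0) by (apply not_0_INR, fact_neq_0).
  assert (INR (fact (m * S k)) <> 0) by (apply not_0_INR, fact_neq_0).
  assert (0 < INR n) by (apply lt_0_INR; lia). assert (0 <= INR k) by apply pos_INR.
  simpl pow. field. repeat split; lra.
Qed.
Definition PP a b N z := sum_f_R0 (fun k => cc a b k * z ^ k) N.
Definition RR a b N z := let M := INR N + 2 in
  a * (M^2 * (1-z)^2 + 2 * M * z * (1-z) + z + z^2) + b * (M * (1-z)^2 + z * (1-z)).
Definition FF a b z := ((a - b) * z + a + b) / (1 - z) ^ 3.

Lemma closed a b N z : (1 - z) ^ 3 * PP a b N z = (a - b) * z + a + b - z ^ (S N) * RR a b N z.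
Proof.
induction N as [|N IH].
- unfold PP, RR, cc; simpl. ring.
- unfold PP in *. simpl sum_f_R0. rewrite Rmult_plus_distr_l, IH.
  unfold RR, cc. rewrite !S_INR. simpl pow. ring.
Qed.

Lemma A_bound (N : nat) z : -1 <= z <= 1 ->
  Rabs ((INR N + 2)^2 * (1-z)^2 + 2 * (INR N + 2) * z * (1-z) + z + z^2) <= 26 * (INR N + 1)^2.
Proof.
intros Hz. assert (HN := pos_INR N). set (M := INR N + 2).
assert (h1 : 0 <= (1-z)^2 <= 4) by (split; nra).
assert (h2 : Rabs (z * (1 - z)) <= 2).
{ rewrite Rabs_mult. assert (Rabs z <= 1) by (apply Rabs_le_between; lra).
  assert (Rabs (1 - z) <= 2) by (apply Rabs_le_between; lra).
  assert (0 <= Rabs z) by apply Rabs_pos. assert (0 <= Rabs (1-z)) by apply Rabs_pos. nra. }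
apply Rabs_le_between in h2.
apply Rabs_le. unfold M. split; nra.
Qed.

Lemma B_bound (N : nat) z : -1 <= z <= 1 ->
  Rabs ((INR N + 2) * (1-z)^2 + z * (1-z)) <= 26 * (INR N + 1)^2.
Proof.
intros Hz. assert (HN := pos_INR N).
assert (h1 : 0 <= (1-z)^2 <= 4) by (split; nra).
apply Rabs_le. split; nra.
Qed.

Lemma RR_bound a b N z : -1 <= z <= 1 ->
  Rabs (RR a b N z) <= 26 * (Rabs a + Rabs b) * (INR N + 1)^2.
Proof.
intros Hz. unfold RR. cbv zeta.
eapply Rle_trans. apply Rabs_triang. rewrite !Rabs_mult.
pose proof (A_bound N z Hz). pose proof (B_bound N z Hz).
pose proof (Rabs_pos a). pose proof (Rabs_pos b).
nra.
Qed.

Lemma diff_bound a b N z r : Rabs z <= r -> r < 1 ->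
  Rabs (FF a b z - PP a b N z) <= r ^ (S N) * (26 * (Rabs a + Rabs b) * (INR N + 1)^2) / (1 - r) ^ 3.
Proof.
intros Hz Hr.
assert (Hz1 : -1 <= z <= 1) by (apply Rabs_le_between; lra).
assert (H1z : 0 < 1 - z) by (apply Rabs_le_between in Hz; lra).
assert (E : FF a b z - PP a b N z = z ^ (S N) * RR a b N z / (1 - z) ^ 3).
{ unfold FF. apply (Rmult_eq_reg_l ((1 - z)^3)); [| apply pow_nonzero; lra].
  rewrite Rmult_minus_distr_l, closed. field. lra. }
rewrite E. unfold Rdiv. rewrite !Rabs_mult, Rabs_inv, <- !RPow_abs.
assert (0 <= Rabs z) by apply Rabs_pos.
apply Rmult_le_compat.
- apply Rmult_le_pos; [apply pow_le; auto| apply Rabs_pos].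
- left; apply Rinv_0_lt_compat, pow_lt, Rabs_pos_lt; lra.
- apply Rmult_le_compat; auto using pow_le, Rabs_pos, pow_incr, RR_bound.
- apply Rinv_le_contravar. apply pow_lt; lra.
  apply pow_incr. split. lra. pose proof (Rle_abs z). rewrite Rabs_right; lra.
Qed.
Lemma inv_lim : is_lim_seq (fun n => / (INR n + 1)) 0.
Proof.
assert (H : is_lim_seq (fun n => INR (S n)) p_infty) by (apply (is_lim_seq_incr_1 INR), is_lim_seq_INR).
apply is_lim_seq_inv in H; [|discriminate].
eapply is_lim_seq_ext. 2: exact H. intros n. cbv beta. rewrite S_INR. reflexivity.
Qed.

Lemma poly_geom r : 0 < r < 1 -> is_lim_seq (fun N => (INR N + 1)^2 * r^N) 0.
Proof.
intros Hr.
set (u := fun N => (INR N + 1)^2 * r^N).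
assert (Hu : forall n, u n <> 0).
{ intro n. unfold u. apply Rmult_integral_contrapositive; split; apply pow_nonzero.
  pose proof (pos_INR n); lra. lra. }
assert (Hl : is_lim_seq (fun n => Rabs (u (S n) / u n)) r).
{ assert (H := is_lim_seq_mult' _ _ _ _ (is_lim_seq_plus' _ _ 1 0 (is_lim_seq_const 1) inv_lim)
     (is_lim_seq_plus' _ _ 1 0 (is_lim_seq_const 1) inv_lim)).
  assert (H2 := is_lim_seq_mult' _ _ _ r H (is_lim_seq_const r)).
  replace ((1 + 0) * (1 + 0) * r) with r in H2 by ring.
  eapply is_lim_seq_ext. 2: exact H2. intros n. unfold u. rewrite S_INR.
  pose proof (pos_INR n).
  rewrite Rabs_right.
  - simpl pow. field. split; [apply pow_nonzero|]; lra.
  - apply Rle_ge. unfold Rdiv. apply Rmult_le_pos. apply Rmult_le_pos; [apply pow_le; lra| apply pow_le; lra].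
    left. apply Rinv_0_lt_compat. apply Rmult_lt_0_compat; apply pow_lt; lra. }
assert (He := ex_series_DAlembert u r (proj2 Hr) Hu Hl).
apply ex_series_lim_0 in He. apply is_lim_seq_abs_0. exact He.
Qed.
Lemma exp_pow_n x n : exp x ^ n = exp (INR n * x).
Proof.
induction n as [|n IH]. simpl. rewrite Rmult_0_l, exp_0. reflexivity.
rewrite S_INR. simpl pow. rewrite IH, <- exp_plus. f_equal. ring.
Qed.

Lemma pow_le_exp z n : 0 <= z -> z ^ n <= exp (INR n * (z - 1)).
Proof.
intros Hz. rewrite <- exp_pow_n. apply pow_incr. split; [lra|].
pose proof (exp_ineq1_le (z - 1)). lra.
Qed.

Lemma u_bound (n q : nat) t : (0 < n)%nat -> (0 < q)%nat -> 0 <= t <= 1 ->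
  t ^ n * (1 - t) ^ q <= INR n ^ n * INR q ^ q / INR (n + q) ^ (n + q).
Proof.
intros Hn Hq Ht.
rewrite pow_add, plus_INR.
assert (Hn' : 0 < INR n) by (apply lt_0_INR; lia).
assert (Hq' : 0 < INR q) by (apply lt_0_INR; lia).
set (M := INR n + INR q).
set (s := INR n / M).
assert (Hs : 0 < s) by (unfold s, M; apply Rdiv_lt_0_compat; lra).
assert (Hs1 : 0 < 1 - s) by (unfold s, M; apply (Rmult_lt_reg_r (INR n + INR q)); [lra|]; field_simplify; lra).
assert (H1 : (t / s) ^ n <= exp (INR n * (t / s - 1))).
{ apply pow_le_exp. unfold Rdiv. apply Rmult_le_pos; [lra|]. left. apply Rinv_0_lt_compat. lra. }
assert (H2 : ((1 - t) / (1 - s)) ^ q <= exp (INR q * ((1 - t) / (1 - s) - 1))).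
{ apply pow_le_exp. unfold Rdiv. apply Rmult_le_pos; [lra|]. left. apply Rinv_0_lt_compat. lra. }
assert (E : exp (INR n * (t / s - 1)) * exp (INR q * ((1 - t) / (1 - s) - 1)) = 1).
{ rewrite <- exp_plus. replace (INR n * (t / s - 1) + INR q * ((1 - t) / (1 - s) - 1)) with 0.
  apply exp_0. unfold s, M. field. split; lra. }
assert (H3 : (t / s) ^ n * ((1 - t) / (1 - s)) ^ q <= 1).
{ apply Rle_trans with (exp (INR n * (t / s - 1)) * exp (INR q * ((1 - t) / (1 - s) - 1))); [|rewrite E; lra].
  apply Rmult_le_compat; auto; apply pow_le; unfold Rdiv; apply Rmult_le_pos; try lra;
  left; apply Rinv_0_lt_compat; lra. }
assert (E2 : t ^ n * (1 - t) ^ q = (t / s) ^ n * ((1 - t) / (1 - s)) ^ q * (s ^ n * (1 - s) ^ q)).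
{ unfold Rdiv. rewrite !Rpow_mult_distr, !pow_inv. field. split; apply pow_nonzero; lra. }
assert (E3 : s ^ n * (1 - s) ^ q = INR n ^ n * INR q ^ q / (M ^ n * M ^ q)).
{ replace (1 - s) with (INR q / M) by (unfold s, M; field; lra).
  unfold s, Rdiv. rewrite !Rpow_mult_distr, !pow_inv. field. split; apply pow_nonzero; unfold M; lra. }
rewrite E2, <- E3.
assert (0 <= s ^ n * (1 - s) ^ q) by (apply Rmult_le_pos; apply pow_le; lra).
nra.
Qed.

Lemma pow_le_one z k : 0 <= z <= 1 -> z ^ k <= 1.
Proof. intros Hz. rewrite <- (pow1 k). apply pow_incr. lra. Qed.

Lemma w_bound n q t : 0 <= t <= 1 -> 0 <= t ^ n * (1 - t) ^ q <= 1.
Proof.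
intros Ht. split. apply Rmult_le_pos; apply pow_le; lra.
rewrite <- (Rmult_1_l 1). apply Rmult_le_compat; try (apply pow_le; lra); apply pow_le_one; lra.
Qed.

Theorem proposition2p1 (m n : nat) (a b x : R) :
  (0 < n)%nat -> (n < m)%nat ->
  Rabs x < INR m ^ m / (INR n ^ n * INR (m - n)%nat ^ (m - n)%nat) ->
  ex_RInt (T_fun m n a b x) 0 1 /\
  is_series (fun k => S_term m n a b x (S k))
    (INR n * RInt (T_fun m n a b x) 0 1).
Proof.
intros Hn Hm Hx.
set (q := (m - n)%nat) in *.
assert (Hq : (0 < q)%nat) by (unfold q; lia).
assert (Hmq : m = (n + q)%nat) by (unfold q; lia).
set (s0 := INR n ^ n * INR q ^ q / INR m ^ m).
assert (Hn' : 0 < INR n) by (apply lt_0_INR; lia).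
assert (Hq' : 0 < INR q) by (apply lt_0_INR; lia).
assert (Hm' : 0 < INR m) by (apply lt_0_INR; lia).
assert (Hs0 : 0 < s0) by (unfold s0; apply Rdiv_lt_0_compat; [apply Rmult_lt_0_compat|]; apply pow_lt; lra).
assert (Hxs : Rabs x * s0 < 1).
{ unfold s0. apply (Rmult_lt_compat_r s0) in Hx; [|exact Hs0].
  unfold s0 in Hx. replace (INR m ^ m / (INR n ^ n * INR q ^ q) * (INR n ^ n * INR q ^ q / INR m ^ m)) with 1 in Hx.
  exact Hx. field. repeat split; apply pow_nonzero; lra. }
set (r := (1 + Rabs x * s0) / 2).
assert (Hr : 0 < r < 1) by (unfold r; pose proof (Rabs_pos x); nra).
set (y := fun t => t ^ n * (1 - t) ^ q * x).
assert (Hy : forall t, 0 <= t <= 1 -> Rabs (y t) <= r).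
{ intros t Ht. unfold y. rewrite Rabs_mult, Rabs_right by (apply Rle_ge, Rmult_le_pos; apply pow_le; lra).
  pose proof (u_bound n q t Hn Hq Ht). rewrite <- Hmq in H. fold s0 in H.
  pose proof (Rabs_pos x). unfold r. nra. }
set (w := fun t => t ^ (n - 1) * (1 - t) ^ q).
assert (HT : forall t, T_fun m n a b x t = w t * x * FF a b (y t)).
{ intro t. unfold T_fun, FF, w, y. fold q. unfold Rdiv. ring. }
assert (HexT : ex_RInt (T_fun m n a b x) 0 1).
{ apply (ex_RInt_continuous (V:=R_CompleteNormedModule)). rewrite Rmin_left, Rmax_right by lra. intros z Hz.
  apply (ex_derive_continuous (K:=R_AbsRing) (V:=R_NormedModule)).
  pose proof (Hy z Hz) as Hyz. unfold y in Hyz. apply Rabs_le_between in Hyz.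
  unfold T_fun. auto_derive. fold q. replace (1 + - z) with (1 - z) by ring.
  set (Y := z ^ n * (1 - z) ^ q * x) in *.
  assert (h : 0 < 1 + - Y) by lra. apply Rgt_not_eq. repeat apply Rmult_lt_0_compat; lra. }
split; [exact HexT|].
set (F := fun k => S_term m n a b x (S k)).
set (g := fun N t => w t * x * PP a b N (y t)).
assert (HI : forall N, is_RInt (g N) 0 1 (sum_f_R0 F N / INR n)).
{ induction N as [|N IH].
  - exact (term_int m n a b x 0 Hn Hm).
  - pose proof (is_RInt_plus _ _ _ _ _ _ IH (term_int m n a b x (S N) Hn Hm)) as H.
    replace (sum_f_R0 F (S N) / INR n) with (plus (sum_f_R0 F N / INR n) (S_term m n a b x (S (S N)) / INR n)).
    + eapply is_RInt_ext. 2: exact H. intros t _. unfold g, PP, plus. simpl. toR. fold q. unfold w, y. cbv beta. ring.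
    + change (sum_f_R0 F (S N)) with (sum_f_R0 F N + F (S N)). unfold F, plus. simpl. field. lra. }
set (E := fun N : nat => r ^ (S N) * (26 * (Rabs a + Rabs b) * (INR N + 1)^2) / (1 - r) ^ 3).
assert (HB : forall N, Rabs (INR n * RInt (T_fun m n a b x) 0 1 - sum_f_R0 F N) <= INR n * (Rabs x * E N)).
{ intro N.
  assert (Hg : RInt (g N) 0 1 = sum_f_R0 F N / INR n) by (apply is_RInt_unique; apply HI).
  replace (sum_f_R0 F N) with (INR n * RInt (g N) 0 1) by (rewrite Hg; field; lra).
  rewrite <- Rmult_minus_distr_l, Rabs_mult, (Rabs_right (INR n)) by lra.
  apply Rmult_le_compat_l; [lra|].
  assert (Hexg : ex_RInt (g N) 0 1) by (eexists; apply HI).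
  pose proof (RInt_minus _ _ _ _ HexT Hexg) as Hmin.
  change (RInt (T_fun m n a b x) 0 1 - RInt (g N) 0 1) with (minus (RInt (T_fun m n a b x) 0 1) (RInt (g N) 0 1)).
  rewrite <- Hmin.
  replace (Rabs x * E N) with ((1 - 0) * (Rabs x * E N)) by ring.
  apply abs_RInt_le_const; [lra| apply ex_RInt_minus; assumption |].
  intros t Ht. unfold minus, plus, opp. simpl. rewrite HT. unfold g.
  replace (w t * x * FF a b (y t) + - (w t * x * PP a b N (y t))) with (w t * x * (FF a b (y t) - PP a b N (y t))) by ring.
  rewrite !Rabs_mult.
  pose proof (w_bound (n - 1) q t Ht) as Hw. fold (w t) in Hw.
  rewrite (Rabs_right (w t)) by lra.
  pose proof (diff_bound a b N (y t) r (Hy t Ht) (proj2 Hr)) as Hd. fold (E N) in Hd.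
  pose proof (Rabs_pos x). pose proof (Rabs_pos (FF a b (y t) - PP a b N (y t))).
  assert (Rabs x * Rabs (FF a b (y t) - PP a b N (y t)) <= Rabs x * E N) by (apply Rmult_le_compat_l; lra).
  assert (0 <= Rabs x * Rabs (FF a b (y t) - PP a b N (y t))) by (apply Rmult_le_pos; lra).
  rewrite Rmult_assoc. nra. }
set (l := INR n * RInt (T_fun m n a b x) 0 1).
assert (HE : is_lim_seq E 0).
{ pose proof (is_lim_seq_scal_l _ (r * (26 * (Rabs a + Rabs b)) / (1 - r) ^ 3) _ (poly_geom r Hr)) as H.
  simpl in H. rewrite Rmult_0_r in H.
  eapply is_lim_seq_ext. 2: exact H. intro N. unfold E. simpl pow. field. lra. }
assert (HE2 : is_lim_seq (fun N => INR n * (Rabs x * E N)) 0).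
{ pose proof (is_lim_seq_scal_l _ (INR n * Rabs x) _ HE) as H. simpl in H. rewrite Rmult_0_r in H.
  eapply is_lim_seq_ext. 2: exact H. intro N. simpl. ring. }
change (is_lim_seq (sum_n F) l).
apply is_lim_seq_le_le with (u := fun N => l - INR n * (Rabs x * E N)) (w := fun N => l + INR n * (Rabs x * E N)).
- intro N. rewrite sum_n_Reals. pose proof (HB N) as h. apply Rabs_le_between in h. fold l in h. lra.
- replace (Finite l) with (Finite (l - 0)) by (f_equal; ring). apply is_lim_seq_minus'; [apply is_lim_seq_const| exact HE2].
- replace (Finite l) with (Finite (l + 0)) by (f_equal; ring). apply is_lim_seq_plus'; [apply is_lim_seq_const| exact HE2].
Qed.
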